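(* Let $G\in\mathcal{C}$, let $C$ be a proper separator of $G$ with full components $L$ and $R$, let $c_1,c_2\in C$, and let $H$ be a $(C,c_1,c_2)$-hole, with $H_L,H_R,\ell_1,\ell_2,r_1,r_2$ as defined below. Suppose $v\in V(G)\setminus V(H)$ has a neighbor in $H_L^*\setminus\{\ell_1,\ell_2\}$ and a neighbor in $H_R^*\setminus\{r_1,r_2\}$. Then $v$ is $(c_1,c_2)$-heavy with respect to $H$.
   Context: All graphs are finite and simple; paths are induced paths; a hole is an induced cycle of length at least four. $\mathcal{C}$ is the class of graphs containing no theta, pyramid, prism or turtle as an induced subgraph (theta: two nonadjacent vertices joined by three otherwise disjoint paths, any two inducing a hole; pyramid: a vertex $a$ joined to the three vertices $b_i$ of a triangle by paths disjoint except at $a$, any two inducing a hole; prism: two disjoint triangles $\{a_i\},\{b_i\}$ joined by disjoint paths $a_i$–$b_i$, any two inducing a hole; turtle: a hole formed by disjoint paths $P_1$ from $a_1$ to $b_1$ and $P_2$ from $a_2$ to $b_2$ with edges $a_1a_2,b_1b_2$, plus adjacent vertices $x,y$, $x$ having $\ge3$ neighbors in $P_1$ and none in $P_2$, $y$ having $\ge3$ neighbors in $P_2$ and none in $P_1$). A minimal separator $C$ of $G$ is a set such that $G\setminus C$ has two distinct components $L,R$ with $N(L)=N(R)=C$; it is proper if it is not a clique, in which case $G\setminus C$ has exactly two components $L,R$ with $N(L)=N(R)=C$ (the full components). For $c_1,c_2\in C$, a $(C,c_1,c_2)$-hole is a hole $H$ with $V(H)\cap C=\{c_1,c_2\}$ whose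 two $c_1$–$c_2$ paths $H_L,H_R$ satisfy $H_L^*\subseteq L$ and $H_R^*\subseteq R$, where $P^*$ denotes the interior (vertices other than the ends) of a path $P$. $\ell_1,\ell_2$ are the neighbors of $c_1,c_2$ in $H_L$, and $r_1,r_2$ are the neighbors of $c_1,c_2$ in $H_R$. For $u\notin V(H)$, $N_H(u)$ is the set of its neighbors in $H$; $u$ is major for $H$ if $N_H(u)\ne\emptyset$ and $N_H(u)$ is not contained in the vertex set of any three-vertex subpath of $H$. A $w$-sector is a subpath $Q=x\text{-}\cdots\text{-}y$ of $H$ with $x,y$ neighbors of $w$ and no interior vertex adjacent to $w$; an extended neighborhood of $w$ in $H$ is $Q\cup(\{x',y'\}\cap N_H(w))$ for a $w$-sector $Q=x\text{-}\cdots\text{-}y$, where $x',y'$ are the neighbors of $x,y$ in $H\setminus V(Q)$; $a,b\in V(H)$ are distant in $H$ with respect to $w$ if no extended neighborhood of $w$ contains both. A vertex $v$ is $(c_1,c_2)$-heavy with respect to $H$ if $v$ is major for $H$ and $c_1,c_2$ are distant in $H$ with respect to $v$. *)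

(* Defs.v *)
(* Finite simple graphs as a symmetric irreflexive relation
   e : rel T on a finite type T. *)
From mathcomp Require Import all_boot.
Set Implicit Arguments.
Unset Strict Implicit.
Unset Printing Implicit Defensive.

Section Graphs.
Variable T : finType.
Variable e : rel T.

Definition ipath (x : T) (p : seq T) : Prop :=
  let s := x :: p in
  uniq s /\
  forall i j, i < size s -> j < size s ->
    e (nth x s i) (nth x s j) = (i == j.+1) || (j == i.+1).

Definition ipath_from_to (x y : T) (p : seq T) : Prop :=
  ipath x p /\ last x p = y.

Definition hole (c : seq T) : Prop :=
  4 <= size c /\ uniq c /\
  forall x y, x \in c -> y \in c -> e x y = (next c x == y) || (next c y == x).

Definition induces_hole (S : {set T}) : Prop :=
  exists c, hole c /\ [set z in c] = S.

Definition vset (s : seq T) : {set T} := [set z in s].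

Definition triangle (a b c : T) : bool := [&& e a b, e b c & e a c].

Definition has_theta : Prop :=
  exists (a b : T) (p1 p2 p3 : seq T),
    [/\ a != b, ~~ e a b,
        [/\ ipath_from_to a b p1, ipath_from_to a b p2 &
             ipath_from_to a b p3] &
        [/\ vset (a :: p1) :&: vset (a :: p2) = [set a; b],
            vset (a :: p1) :&: vset (a :: p3) = [set a; b],
            vset (a :: p2) :&: vset (a :: p3) = [set a; b] &
          [/\ induces_hole (vset (a :: p1) :|: vset (a :: p2)),
            induces_hole (vset (a :: p1) :|: vset (a :: p3)) &
            induces_hole (vset (a :: p2) :|: vset (a :: p3))]]].

Definition has_pyramid : Prop :=
  exists (a b1 b2 b3 : T) (p1 p2 p3 : seq T),
    [/\ triangle b1 b2 b3,
        ipath_from_to a b1 p1, ipath_from_to a b2 p2, ipath_from_to a b3 p3 &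
        [/\ vset (a :: p1) :&: vset (a :: p2) = [set a],
            vset (a :: p1) :&: vset (a :: p3) = [set a],
            vset (a :: p2) :&: vset (a :: p3) = [set a] &
          [/\ induces_hole (vset (a :: p1) :|: vset (a :: p2)),
            induces_hole (vset (a :: p1) :|: vset (a :: p3)) &
            induces_hole (vset (a :: p2) :|: vset (a :: p3))]]].

Definition has_prism : Prop :=
  exists (a1 a2 a3 b1 b2 b3 : T) (p1 p2 p3 : seq T),
    [/\ triangle a1 a2 a3, triangle b1 b2 b3,
        [disjoint [set a1; a2; a3] & [set b1; b2; b3]],
        [/\ ipath_from_to a1 b1 p1, ipath_from_to a2 b2 p2 &
            ipath_from_to a3 b3 p3] &
        [/\ [disjoint vset (a1 :: p1) & vset (a2 :: p2)],
            [disjoint vset (a1 :: p1) & vset (a3 :: p3)],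
            [disjoint vset (a2 :: p2) & vset (a3 :: p3)] &
          [/\ induces_hole (vset (a1 :: p1) :|: vset (a2 :: p2)),
            induces_hole (vset (a1 :: p1) :|: vset (a3 :: p3)) &
            induces_hole (vset (a2 :: p2) :|: vset (a3 :: p3))]]].

Definition has_turtle : Prop :=
  exists (a1 b1 a2 b2 x y : T) (p1 p2 : seq T),
    [/\ ipath_from_to a1 b1 p1, ipath_from_to a2 b2 p2,
        [/\ [disjoint vset (a1 :: p1) & vset (a2 :: p2)], e a1 a2 & e b1 b2],
        induces_hole (vset (a1 :: p1) :|: vset (a2 :: p2)) &
        [/\ e x y,
            x \notin vset (a1 :: p1) :|: vset (a2 :: p2),
            y \notin vset (a1 :: p1) :|: vset (a2 :: p2),
            (3 <= #|[set z in vset (a1 :: p1) | e x z]|)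
              /\ [set z in vset (a2 :: p2) | e x z] = set0 &
            (3 <= #|[set z in vset (a2 :: p2) | e y z]|)
              /\ [set z in vset (a1 :: p1) | e y z] = set0]].

Definition in_class_C : Prop :=
  ~ has_theta /\ ~ has_pyramid /\ ~ has_prism /\ ~ has_turtle.

Definition nbd (L : {set T}) : {set T} :=
  [set y | (y \notin L) && [exists x in L, e x y]].

Definition component (C L : {set T}) : Prop :=
  [/\ L != set0, [disjoint L & C],
      (forall x y, x \in L -> y \in L ->
         connect [rel u v | [&& u \in L, v \in L & e u v]] x y) &
      (forall x y, x \in L -> y \notin C -> e x y -> y \in L)].

Definition clique (C : {set T}) : Prop :=
  forall x y, x \in C -> y \in C -> x != y -> e x y.

Definition min_sep_full (C L R : {set T}) : Prop :=
  [/\ component C L, component C R, L != R, nbd L = C & nbd R = C].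

Definition proper_sep (C L R : {set T}) : Prop :=
  min_sep_full C L R /\ ~ clique C.

(** The hole H with H_L = c1 :: PL ++ [c2] and H_R = c1 :: PR ++ [c2]:
    as a cyclic sequence H = c1, PL, c2, reverse PR. *)
Definition hole_of (c1 c2 : T) (PL PR : seq T) : seq T :=
  c1 :: PL ++ c2 :: rev PR.

(** (C,c1,c2)-hole, given via the interiors PL = H_L^* and PR = H_R^*. *)
Definition sep_hole (C L R : {set T}) (c1 c2 : T) (PL PR : seq T) : Prop :=
  [/\ hole (hole_of c1 c2 PL PR),
      vset (hole_of c1 c2 PL PR) :&: C = [set c1; c2],
      {subset PL <= L} & {subset PR <= R}].

Definition nbH (H : seq T) (u : T) : {set T} := [set z in H | e u z].

(** u is major for the hole H. Three-vertex subpaths of H are the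
    [take 3 (rot i H)], i < |H|. *)
Definition major (H : seq T) (u : T) : Prop :=
  nbH H u != set0 /\
  forall i, i < size H -> ~~ (nbH H u \subset vset (take 3 (rot i H))).

(** A subpath Q of H of k+1 >= 2
    vertices starts at x with rot i H = x :: s', so Q = x :: take k s',
    y = last x (take k s'), interior = take k.-1 s'; the neighbour of x in
    H \ V(Q) is last x s' and that of y is nth x s' k (when Q misses no
    vertex of H these both fall back inside Q, which is harmless). *)
Definition ext_nbhd (H : seq T) (w : T) (S : {set T}) : Prop :=
  exists (i k : nat) (x : T) (s' : seq T),
    [/\ i < size H /\ rot i H = x :: s', 0 < k <= size s',
        e w x && e w (last x (take k s')),
        (forall z, z \in take k.-1 s' -> ~~ e w z) &
        S = vset (x :: take k s')
            :|: ([set last x s'; nth x s' k] :&: nbH H w)].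

Definition distant (H : seq T) (w a b : T) : Prop :=
  forall S, ext_nbhd H w S -> ~ (a \in S /\ b \in S).

Definition heavy (H : seq T) (c1 c2 v : T) : Prop :=
  major H v /\ distant H v c1 c2.

End Graphs.

(* Main.v *)
Require Import Defs.
From mathcomp Require Import all_boot zify.

Lemma nth_rot' (T : Type) (x0 : T) (s : seq T) i m :
  i <= size s -> m < size s ->
  nth x0 (rot i s) m = nth x0 s (if i + m < size s then i + m else i + m - size s).
Proof.
move=> Hi Hm; rewrite /rot nth_cat size_drop nth_drop.
case: ifP => H1; case: ifP => H2 //; try lia.
rewrite nth_take; last lia. congr nth; lia.
Qed.

Lemma pos_rot (T : eqType) (s : seq T) i z :
  uniq s -> i < size s -> z \in s ->
  index z (rot i s) = if i <= index z s then index z s - i else size s - i + index z s.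
Proof.
move=> Hu Hi Hz; have Hh : index z s < size s by rewrite index_mem.
have Hm : (if i <= index z s then index z s - i else size s - i + index z s) < size s.
  case: ifP; lia.
have Hn : nth z (rot i s) (if i <= index z s then index z s - i else size s - i + index z s) = z.
  rewrite nth_rot' ?size_rot //; last lia.
  rewrite [X in nth z s X](_ : _ = index z s) ?nth_index //.
  case: ifP; case: ifP; lia.
by rewrite -{1}Hn index_uniq ?rot_uniq ?size_rot.
Qed.

Lemma mid_index (T : eqType) (s : seq T) z d1 d2 :
  z \in s -> z != head d1 s -> z != last d2 s -> 0 < index z s /\ index z s < (size s).-1.
Proof.
move=> Hz H1 H2; have Hh : index z s < size s by rewrite index_mem.
split.
  case E: (index z s) => //; move: H1; by rewrite -nth0 -E (nth_index _ Hz) eqxx.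
case: (ltnP (index z s) (size s).-1) => // H.
have E : index z s = (size s).-1 by lia.
by move: H2; rewrite -(nth_last d2) -E (nth_index _ Hz) eqxx.
Qed.

Lemma head_rev (T : Type) (d : T) s : head d (rev s) = last d s.
Proof. by case/lastP: s => // s x; rewrite rev_rcons last_rcons. Qed.
Lemma last_rev (T : Type) (d : T) s : last d (rev s) = head d s.
Proof. by case: s => // x s; rewrite rev_cons last_rcons. Qed.

Definition posf (n i h : nat) := if i <= h then h - i else n - i + h.

Lemma arith_major a b p r i :
  0 < p < a.-1 -> 0 < r < b.-1 -> i < a + b + 2 ->
  posf (a+b+2) i p.+1 < 3 -> posf (a+b+2) i (a.+2 + r) < 3 -> False.
Proof. rewrite /posf; case: (leqP i p.+1); case: (leqP i (a.+2+r)); lia. Qed.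

Lemma arith_dist a b p r i k :
  0 < p < a.-1 -> 0 < r < b.-1 -> i < a + b + 2 -> 0 < k <= (a+b+2).-1 ->
  ~ (0 < posf (a+b+2) i p.+1 < k) -> ~ (0 < posf (a+b+2) i (a.+2 + r) < k) ->
  posf (a+b+2) i 0 <= k.+1 \/ posf (a+b+2) i 0 = (a+b+2).-1 ->
  posf (a+b+2) i a.+1 <= k.+1 \/ posf (a+b+2) i a.+1 = (a+b+2).-1 -> False.
Proof. rewrite /posf; case: (leqP i p.+1); case: (leqP i (a.+2+r)); case: (leqP i 0); case: (leqP i a.+1); lia. Qed.

Lemma mid_index_rev (T : eqType) (s : seq T) z d1 d2 :
  z \in s -> z != head d1 s -> z != last d2 s -> 0 < index z (rev s) /\ index z (rev s) < (size s).-1.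
Proof.
move=> Hz H1 H2; rewrite -size_rev; apply: (@mid_index _ _ _ d2 d1).
- by rewrite mem_rev.
- by rewrite head_rev.
- by rewrite last_rev.
Qed.

Theorem lemma3p3 (T : finType) (e : rel T)
    (e_sym : symmetric e) (e_irr : irreflexive e)
    (HG : in_class_C e)
    (C L R : {set T}) (HCsep : proper_sep e C L R)
    (c1 c2 : T) (c1C : c1 \in C) (c2C : c2 \in C)
    (PL PR : seq T) (HH : sep_hole e C L R c1 c2 PL PR)
    (v : T) (vH : v \notin hole_of c1 c2 PL PR)
    (vL : exists2 x, x \in PL &
            [&& x != head c2 PL, x != last c1 PL & e v x])
    (vR : exists2 x, x \in PR &
            [&& x != head c2 PR, x != last c1 PR & e v x]) :
  heavy e (hole_of c1 c2 PL PR) c1 c2 v.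
Proof.
case: HH => [[_ [Hu _]] _ _ _].
set H := hole_of c1 c2 PL PR in Hu vH *.
have Hu' := Hu.
move: Hu' => /= /andP [Hc1 /=]; rewrite cat_uniq => /and3P [HuL Hdis /= /andP [Hc2 HuR]].
have sH : size H = size PL + size PR + 2.
  by rewrite /H /hole_of /= size_cat /= size_rev; lia.
case: vL => x0 x0L /and3P [xh xl ex].
case: vR => y0 y0R /and3P [yh yl ey].
have [ix1 ix2] := @mid_index _ _ _ _ _ x0L xh xl.
have [iy1 iy2] := @mid_index_rev _ _ _ _ _ y0R yh yl.
have c1ne : forall z, z \in PL ++ c2 :: rev PR -> (c1 == z) = false.
  by move=> z Hz; apply/eqP => E; move: Hc1; rewrite E Hz.
have x0H : x0 \in H by rewrite /H /hole_of inE mem_cat x0L orbT.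
have y0H : y0 \in H by rewrite /H /hole_of inE mem_cat inE mem_rev y0R !orbT.
have c1H : c1 \in H by rewrite /H /hole_of inE eqxx.
have c2H : c2 \in H by rewrite /H /hole_of inE mem_cat inE eqxx !orbT.
have hc1 : index c1 H = 0 by rewrite /H /hole_of /= eqxx.
have hx0 : index x0 H = (index x0 PL).+1.
  by rewrite /H /hole_of /= c1ne ?mem_cat ?x0L // index_cat x0L.
have c2PL : c2 \notin PL.
  by apply/negP => Hc; move: Hdis; apply/negP/negPn/hasP; exists c2; rewrite ?inE ?eqxx.
have hc2 : index c2 H = (size PL).+1.
  by rewrite /H /hole_of /= c1ne ?mem_cat ?inE ?eqxx ?orbT // index_cat (negbTE c2PL) /= eqxx addn0.
have y0PL : y0 \notin PL.
  by apply/negP => Hc; move: Hdis; apply/negP/negPn/hasP; exists y0; rewrite ?inE ?mem_rev ?y0R ?orbT.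
have y0c2 : (c2 == y0) = false.
  by apply/eqP => E; move: Hc2; rewrite E mem_rev y0R.
have hy0 : index y0 H = (size PL).+2 + index y0 (rev PR).
  rewrite /H /hole_of /= c1ne ?mem_cat ?inE ?mem_rev ?y0R ?orbT //.
  by rewrite index_cat (negbTE y0PL) /= y0c2 addnS addSn.
have Hi : forall i, i < size H -> forall z, z \in H ->
    index z (rot i H) = posf (size H) i (index z H).
  by move=> i Hi z Hz; apply: pos_rot.
split; first split.
- apply/set0Pn; exists x0; by rewrite inE x0H ex.
- move=> i Hi0; apply/negP => /subsetP Hsub.
  have : x0 \in nbH e H v by rewrite inE x0H ex.
  move/Hsub; rewrite inE in_take ?mem_rot // Hi // hx0.
  have : y0 \in nbH e H v by rewrite inE y0H ey.
  move/Hsub; rewrite inE in_take ?mem_rot // Hi // hy0.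
  rewrite sH => Hy Hx; rewrite sH in Hi0.
  apply: (@arith_major (size PL) (size PR) (index x0 PL) (index y0 (rev PR)) i).
  + by apply/andP.
  + by apply/andP.
  + exact: Hi0.
  + exact: Hx.
  + exact: Hy.
move=> S [i [k [x [s' [[Hi0 Hrot] Hk Hee Hnon HS]]]]] [h1 h2].
have sr : size s' = (size H).-1 by rewrite -(size_rot i H) Hrot.
have Hnadj : forall z, z \in H -> e v z -> ~ (0 < index z (rot i H) < k).
  move=> z Hz ez /andP [m1 m2].
  set m := index z (rot i H) in m1 m2.
  have Hn : nth z (rot i H) m = z by rewrite nth_index ?mem_rot.
  move: Hn; rewrite Hrot -(prednK m1).
  rewrite /= => Hn.
  have : z \in take k.-1 s'.
    have mk : m.-1 < k.-1 by clear -m1 m2; lia.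
    rewrite -Hn -(nth_take z mk).
    have kk : k.-1 < size s'.
      by case/andP: Hk => k1 k2; apply: (leq_trans _ k2); rewrite prednK.
    by rewrite mem_nth // size_take kk.
  by move/Hnon; rewrite ez.
have HuR' : uniq (rot i H) by rewrite rot_uniq.
have Hin : forall z, z \in S -> index z (rot i H) <= k.+1 \/ index z (rot i H) = (size H).-1.
  move=> z; rewrite HS in_setU => /orP [Hz | ].
  - left; move: Hz; rewrite /vset in_set (_ : x :: take k s' = take k.+1 (rot i H)); last by rewrite Hrot.
    rewrite in_take_leq ?size_rot //.
      by move/ltnW.
    by rewrite -(size_rot i H) Hrot /=; case/andP: Hk.
  rewrite in_setI in_set2 => /andP [/orP [/eqP Ez | /eqP Ez] _].
  - right; rewrite Ez (last_nth x) -Hrot index_uniq ?size_rot ?sr //; clear -Hi0; lia.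
  - left; case: (ltnP k (size s')) => Hks.
    + have E : nth x s' k = nth x (rot i H) k.+1 by rewrite Hrot.
      have Hk1 : k.+1 < size (rot i H) by rewrite Hrot /= ltnS.
      by rewrite Ez E index_uniq.
    + by rewrite Ez nth_default // Hrot /= eqxx.
have n1 := Hnadj _ x0H ex.
have n2 := Hnadj _ y0H ey.
have m1 := Hin _ h1.
have m2 := Hin _ h2.
move: n1 n2 m1 m2; rewrite !Hi // hx0 hy0 hc1 hc2 sH => n1 n2 m1 m2.
rewrite sH in sr Hi0; rewrite sr in Hk.
apply: (@arith_dist (size PL) (size PR) (index x0 PL) (index y0 (rev PR)) i k).
- by apply/andP.
- by apply/andP.
- exact: Hi0.
- exact: Hk.
- exact: n1.
- exact: n2.
- exact: m1.
- exact: m2.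
Qed.
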